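(* Let $d\ge1$ and let $Z_1,Z_2$ be two nonzero $d$-cycles over the vertex set $[d+4]$. Then there is a $(d-1)$-simplex belonging to both $K(\mathrm{Supp}(Z_1))$ and $K(\mathrm{Supp}(Z_2))$.
   Context: Fix a field $\mathbb F$. A $d$-simplex is a $(d+1)$-element subset of the vertex set, oriented by increasing order $s_1<\dots<s_{d+1}$. A $d$-chain is a formal $\mathbb F$-combination of $d$-simplices with support the set of simplices with nonzero coefficient; $\partial\sigma=\sum_i(-1)^{i-1}(\sigma\setminus\{s_i\})$ extended linearly; a $d$-cycle is a $d$-chain $Z$ with $\partial Z=0$. For a set $S$ of simplices, $K(S)$ is the complex of all subsets of members of $S$. *)

(* Defs.v *)
From HB Require Import structures.
From mathcomp Require Import all_boot all_order all_algebra.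
Set Implicit Arguments. Unset Strict Implicit. Unset Printing Implicit Defensive.
Import GRing.Theory.
Local Open Scope ring_scope.

(* Vertex set [n] is 'I_n; a simplex is a finite subset {set 'I_n};
   a chain is a function from simplices to the field F (finitely supported
   automatically since there are finitely many simplices). *)
Definition chain (F : fieldType) (n : nat) := {ffun {set 'I_n} -> F}.

Definition is_dchain (F : fieldType) (n d : nat) (c : chain F n) : Prop :=
  forall s : {set 'I_n}, c s != 0 -> #|s| = d.+1.

(* 0-based position of v in sigma under increasing order: i-1 where v = s_i *)
Definition pos (n : nat) (sigma : {set 'I_n}) (v : 'I_n) : nat :=
  #|[set u in sigma | (u < v)%N]|.

(* boundary: extend  d sigma = sum_i (-1)^(i-1) (sigma \ {s_i})  linearly *)
Definition boundary (F : fieldType) (n : nat) (c : chain F n) : chain F n :=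
  [ffun tau : {set 'I_n} =>
     \sum_(sigma : {set 'I_n})
        \sum_(v in sigma | sigma :\ v == tau)
           (-1) ^+ pos sigma v * c sigma].

Definition is_dcycle (F : fieldType) (n d : nat) (c : chain F n) : Prop :=
  is_dchain d c /\ boundary c = 0.

Definition supp (F : fieldType) (n : nat) (c : chain F n) : {set {set 'I_n}} :=
  [set s | c s != 0].

Definition in_K (n : nat) (S : {set {set 'I_n}}) (tau : {set 'I_n}) : Prop :=
  exists2 s, s \in S & tau \subset s.

(* Main.v *)
Require Import Defs.
From mathcomp Require Import all_boot all_order all_algebra zify.
Local Open Scope ring_scope.
Import GRing.Theory.
Section Comb.
Local Set Implicit Arguments. Local Unset Strict Implicit.
Local Open Scope nat_scope.
Variable T : finType.
Definition exch (P : {set T} -> Prop) :=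
  forall A, P A -> forall v, v \notin A -> exists2 w, w \in A & P (v |: (A :\ w)).

Lemma diff_ex (A B : {set T}) : #|A :&: B| < #|A| -> exists2 a, a \in A & a \notin B.
Proof.
move=> h; have: 0 < #|A :\: B| by have := cardsID B A; lia.
by case/card_gt0P=> a; rewrite inE => /andP[? ?]; exists a.
Qed.

Lemma two_in (A : {set T}) a b : a \in A -> b \in A -> a != b -> 1 < #|A|.
Proof. by move=> ha hb ab; apply/card_gt1P; exists a, b. Qed.

Lemma comb1 (P Q : {set T} -> Prop) (eP : exch P) (eQ : exch Q) A B :
  P A -> Q B -> #|A| = 3 -> #|B| = 3 -> #|A :&: B| = 1 ->
  exists A', exists2 B', P A' /\ Q B' & 1 < #|A' :&: B'|.
Proof.
move=> PA QB cA cB I1; move/eqP/cards1P: (I1) => [x Ix].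
have xA : x \in A by have := set11 x; rewrite -Ix inE => /andP[].
have xB : x \in B by have := set11 x; rewrite -Ix inE => /andP[].
have [b bB bA] : exists2 b, b \in B & b \notin A.
  by apply: diff_ex; rewrite setIC I1 cB.
have [a aA aB] : exists2 a, a \in A & a \notin B.
  by apply: diff_ex; rewrite I1 cA.
have [w wA Pw] := eP _ PA _ bA.
have [u uB Qu] := eQ _ QB _ aB.
have [wx|wx] := eqVneq w x; last first.
  exists (b |: (A :\ w)), B => //; apply: (@two_in _ b x).
  - by rewrite !inE eqxx bB.
  - by rewrite !inE xA xB [x == w]eq_sym wx orbT.
  by apply: contraNneq bA => ->.
have [ux|ux] := eqVneq u x; last first.
  exists A, (a |: (B :\ u)) => //; apply: (@two_in _ a x).
  - by rewrite !inE eqxx aA.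
  - by rewrite !inE xA xB [x == u]eq_sym ux orbT.
  by apply: contraNneq aB => ->.
have ax : a != x by apply: contraNneq aB => ->.
have bx : b != x by apply: contraNneq bA => ->.
exists (b |: (A :\ w)), (a |: (B :\ u)) => //; apply: (@two_in _ a b).
- by rewrite !inE eqxx aA wx ux ax !orbT.
- by rewrite !inE eqxx bB wx ux bx !orbT.
by apply: contraNneq aB => ->.
Qed.

Lemma comb (P Q : {set T} -> Prop) (eP : exch P) (eQ : exch Q) A B
  (cP : forall A, P A -> #|A| = 3) (cQ : forall B, Q B -> #|B| = 3) :
  P A -> Q B -> exists A', exists2 B', P A' /\ Q B' & 1 < #|A' :&: B'|.
Proof.
move=> PA QB.
have gen : forall A, P A -> 0 < #|A :&: B| -> exists A', exists2 B', P A' /\ Q B' & 1 < #|A' :&: B'|.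
  move=> A0 PA0 h; case: (ltnP 1 #|A0 :&: B|) => h2; first by exists A0, B.
  by apply: (comb1 eP eQ PA0 QB (cP _ PA0) (cQ _ QB)); lia.
case: (ltnP 0 #|A :&: B|) => h; first exact: gen PA h.
have [b bB] : exists b, b \in B by apply/card_gt0P; rewrite (cQ _ QB).
have bA : b \notin A.
  apply/negP => bA; have : 0 < #|A :&: B| by apply/card_gt0P; exists b; rewrite inE bA bB.
  lia.
have [w wA Pw] := eP _ PA _ bA.
by apply: (gen _ Pw); apply/card_gt0P; exists b; rewrite !inE eqxx bB.
Qed.
End Comb.

Lemma sub_card (T : finType) (k : nat) (S : {set T}) : (k <= #|S|)%N ->
  exists2 t : {set T}, t \subset S & #|t| = k.
Proof.
elim: k => [|k IH] h; first by exists set0; rewrite ?sub0set ?cards0.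
have [t tS ct] := IH (ltnW h).
have: (0 < #|S :\: t|)%N by have := cardsID t S; have := subset_leq_card tS;
  rewrite (setIidPr tS); lia.
case/card_gt0P => x; rewrite inE => /andP[xt xS].
exists (x |: t); first by rewrite subUset sub1set xS tS.
by rewrite cardsU1 xt ct.
Qed.

Lemma cyc_exch (F : fieldType) n d (Z : chain F n) : is_dcycle d Z ->
  forall s, Z s != 0 -> forall v, v \in s ->
  exists2 w, w \notin s & Z (w |: (s :\ v)) != 0.
Proof.
move=> [_ hb] s Zs v vs.
case: (pickP (fun w => (w \notin s) && (Z (w |: (s:\v)) != 0))) => [w /andP[]|H];
  first by exists w.
have H' : forall w, w \notin s -> Z (w |: (s:\v)) = 0.
  by move=> w ws; move: (H w); rewrite ws /= => /negbFE/eqP.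
have : boundary Z (s :\ v) = 0 by rewrite hb ffunE.
rewrite ffunE (bigD1 s) //= [X in _ + X]big1 ?addr0; last first.
  move=> sg sgs; apply: big1 => u /andP[us /eqP e].
  have esg : sg = u |: (s :\ v) by rewrite -e setD1K.
  have [uv|uv] := eqVneq u v.
    by move: sgs; rewrite esg uv setD1K ?eqxx.
  suff -> : Z sg = 0 by rewrite mulr0.
  rewrite esg H' //; apply/negP => us'.
  have : u \in sg :\ u by rewrite e !inE uv us'.
  by rewrite !inE eqxx.
rewrite (bigD1 v) /=; last by rewrite vs eqxx.
rewrite big1 ?addr0; last first.
  move=> u /andP[/andP[us /eqP e] uv].
  have : v \in s :\ u by rewrite !inE eq_sym uv vs.
  by rewrite e !inE eqxx.
move/eqP; rewrite mulf_eq0 signr_eq0 /= (negbTE Zs). by [].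
Qed.

Theorem mainTheorem13 (F : fieldType) (d : nat) (hd : (1 <= d)%N)
  (Z1 Z2 : chain F (d + 4))
  (c1 : is_dcycle d Z1) (c2 : is_dcycle d Z2)
  (nz1 : Z1 != 0) (nz2 : Z2 != 0) :
  exists tau : {set 'I_(d + 4)},
    #|tau| = d /\ in_K (supp Z1) tau /\ in_K (supp Z2) tau.
Proof.
pose P1 := fun A : {set 'I_(d+4)} => Z1 (~: A) != 0.
pose P2 := fun A : {set 'I_(d+4)} => Z2 (~: A) != 0.
have exchZ : forall Z : chain F (d + 4), is_dcycle d Z ->
    exch (fun A => Z (~: A) != 0).
  move=> Z cZ A PA v vA.
  have vs : v \in ~: A by rewrite inE.
  have [w ws Zw] := @cyc_exch _ _ _ _ cZ _ PA _ vs.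
  exists w; first by move: ws; rewrite inE negbK.
  suff <- : w |: (~: A :\ v) = ~: (v |: (A :\ w)) by [].
  move: ws; rewrite inE negbK => wA.
  apply/setP => x; rewrite !inE.
  have [->|xw] := eqVneq x w.
    by rewrite wA; case: eqVneq => // e; move: vA; rewrite -e wA.
  by case: eqVneq.
have cardZ : forall Z : chain F (d + 4), is_dcycle d Z ->
    forall A, Z (~: A) != 0 -> #|A| = 3%N.
  move=> Z [cZ _] A PA; have := cZ _ PA; have := cardsC A; rewrite card_ord; lia.
have neZ : forall Z : chain F (d + 4), Z != 0 -> exists A, Z (~: A) != 0.
  move=> Z nz; case: (pickP (fun s => Z s != 0)) => [s Hs|H].
    by exists (~: s); rewrite setCK.
  by case/eqP: nz; apply/ffunP => s; rewrite ffunE; move: (H s) => /negbFE/eqP.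
have [A0 PA0] := neZ _ nz1.
have [B0 PB0] := neZ _ nz2.
have [A [B [PA PB] hAB]] := comb (exchZ _ c1) (exchZ _ c2) (cardZ _ c1) (cardZ _ c2) PA0 PB0.
have cA := cardZ _ c1 _ PA; have cB := cardZ _ c2 _ PB.
have : (d <= #|~: (A :|: B)|)%N.
  have := cardsC (A :|: B); have := cardsUI A B; rewrite card_ord; lia.
case/sub_card => tau ht ct.
exists tau; split => //; split.
  exists (~: A); first by rewrite inE.
  by apply: subset_trans ht _; rewrite setCS subsetUl.
exists (~: B); first by rewrite inE.
by apply: subset_trans ht _; rewrite setCS subsetUr.
Qed.
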